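(* Let $K\in\mathcal{B}(H)$ and let $\Lambda_{TU}=\{(F(x),\Lambda_x,v(x))\}_{x\in X}$ be a continuous $(T,U)$-controlled $K$-$g$-fusion frame for $H$ with (positive) frame operator $S_C$. Let $V\in\mathcal{B}(H)$ be invertible such that $V^*$ commutes with $T$ and with $U$. Then the following are equivalent: (i) $\Gamma_{TU}=\{(VF(x),\Lambda_xP_{F(x)}V^*,v(x))\}_{x\in X}$ is a continuous $(T,U)$-controlled $VK$-$g$-fusion frame for $H$, i.e. there exist $0<A'\le B'<\infty$ with $$A'\|(VK)^*f\|^2\le\int_X v(x)^2\langle\Lambda_xP_{F(x)}V^*P_{VF(x)}Uf,\;\Lambda_xP_{F(x)}V^*P_{VF(x)}Tf\rangle\,d\mu(x)\le B'\|f\|^2\quad(f\in H);$$ (ii) the quotient operator $[(VK)^*/S_C^{1/2}V^*]$ is bounded; (iii) the quotient operator $[(VK)^*/(VS_CV^* )^{1/2}]$ is bounded.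
   Context: $H$ is a separable complex Hilbert space, $\mathcal{B}(H)$ the bounded operators on $H$, $\mathcal{GB}^+(H)$ the positive bounded operators on $H$ with bounded inverse, $P_M$ the orthogonal projection onto a closed subspace $M$. Let $(X,\mu)$ be a measure space, $\{K_x\}_{x\in X}$ Hilbert spaces, $v:X\to\mathbb{R}^+$ measurable, $F$ a map from $X$ to closed subspaces of $H$ with $x\mapsto P_{F(x)}f$ weakly measurable for all $f$, $\Lambda_x\in\mathcal{B}(F(x),K_x)$, and $T,U\in\mathcal{GB}^+(H)$. For $L\in\mathcal{B}(H)$, the family is a continuous $(T,U)$-controlled $L$-$g$-fusion frame for $H$ if there exist $0<A\le B<\infty$ with $A\|L^*f\|^2\le\int_X v(x)^2\langle\Lambda_xP_{F(x)}Uf,\Lambda_xP_{F(x)}Tf\rangle d\mu(x)\le B\|f\|^2$ for all $f\in H$. Its frame operator $S_C\in\mathcal{B}(H)$ is given by $\langle S_Cf,g\rangle=\int_X v(x)^2\langle T^*P_{F(x)}\Lambda_x^*\Lambda_xP_{F(x)}Uf,g\rangle d\mu(x)$. For $A_1,A_2\in\mathcal{B}(H)$, the quotient operator $[A_1/A_2]$ is the map $A_2f\mapsto A_1f$ from $\mathcal{R}(A_2)$ to $\mathcal{R}(A_1)$; it is bounded if it is well defined and there is $C>0$ with $\|A_1f\|\le C\|A_2f\|$ for all $f\in H$. *)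

(* Defs.v *)
From HB Require Import structures.
From mathcomp Require Import all_boot all_order all_algebra.
From mathcomp Require Import all_classical all_reals all_analysis.
From mathcomp Require Import complex.

Set Implicit Arguments.
Unset Strict Implicit.
Unset Printing Implicit Defensive.

Import Order.TTheory GRing.Theory Num.Theory.
Local Open Scope ring_scope.
Local Open Scope classical_set_scope.
Local Open Scope complex_scope.

Record hilbert (R : realType) := Hilbert {
  hcar :> lmodType R[i];
  hdot : hcar -> hcar -> R[i];
  hdot_linl : forall (a : R[i]) (x y z : hcar),
      hdot (a *: x + y) z = a * hdot x z + hdot y z;
  hdot_sym : forall x y : hcar, hdot y x = (hdot x y)^*;
  hdot_pos : forall x : hcar, 0 <= hdot x x;
  hdot_def : forall x : hcar, hdot x x = 0 -> x = 0;
  hcomplete : forall u : nat -> hcar,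
      (forall e : R, 0 < e -> exists N : nat, forall m n : nat,
         (N <= m)%N -> (N <= n)%N ->
         Num.sqrt (complex.Re (hdot (u m - u n) (u m - u n))) < e) ->
      exists l : hcar, forall e : R, 0 < e -> exists N : nat, forall n : nat,
         (N <= n)%N -> Num.sqrt (complex.Re (hdot (u n - l) (u n - l))) < e
}.

Section HilbertDefs.
Variable R : realType.

Definition hnorm (H : hilbert R) (x : H) : R := Num.sqrt (complex.Re (hdot x x)).

Definition separable (H : hilbert R) : Prop :=
  exists d : nat -> H, forall (x : H) (e : R), 0 < e ->
    exists n : nat, hnorm (x - d n) < e.

Definition is_linear_op (H1 H2 : hilbert R) (A : H1 -> H2) : Prop :=
  forall (a : R[i]) (x y : H1), A (a *: x + y) = a *: A x + A y.

Definition is_bounded (H1 H2 : hilbert R) (A : H1 -> H2) : Prop :=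
  is_linear_op A /\ exists C : R, forall x : H1, hnorm (A x) <= C * hnorm x.

Definition is_bounded_on (H1 H2 : hilbert R) (M : set H1) (A : H1 -> H2) : Prop :=
  (forall (a : R[i]) (x y : H1), M x -> M y -> A (a *: x + y) = a *: A x + A y)
  /\ exists C : R, forall x : H1, M x -> hnorm (A x) <= C * hnorm x.

Definition is_adjoint (H1 H2 : hilbert R) (A : H1 -> H2) (Astar : H2 -> H1) : Prop :=
  forall (x : H1) (y : H2), hdot (A x) y = hdot x (Astar y).

Definition has_bounded_inverse (H : hilbert R) (A : H -> H) : Prop :=
  exists B : H -> H, is_bounded B /\ (forall x, B (A x) = x) /\ (forall x, A (B x) = x).

Definition is_positive (H : hilbert R) (A : H -> H) : Prop :=
  forall x : H, 0 <= hdot (A x) x.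

Definition in_GBplus (H : hilbert R) (A : H -> H) : Prop :=
  [/\ is_bounded A, is_positive A & has_bounded_inverse A].

Definition closed_subspace (H : hilbert R) (M : set H) : Prop :=
  [/\ M 0, (forall (a : R[i]) x y, M x -> M y -> M (a *: x + y)) &
      forall (u : nat -> H) (l : H), (forall n, M (u n)) ->
        (forall e : R, 0 < e -> exists N : nat, forall n : nat,
           (N <= n)%N -> hnorm (u n - l) < e) -> M l].

Definition is_orth_proj (H : hilbert R) (M : set H) (P : H -> H) : Prop :=
  forall x : H, M (P x) /\ forall y : H, M y -> hdot (x - P x) y = 0.

Definition is_sqrt (H : hilbert R) (S Q : H -> H) : Prop :=
  [/\ is_bounded Q, is_positive Q & forall x, Q (Q x) = S x].

Definition quotient_bounded (H : hilbert R) (A1 A2 : H -> H) : Prop :=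
  (forall f g : H, A2 f = A2 g -> A1 f = A1 g) /\
  exists C : R, 0 < C /\ forall f : H, hnorm (A1 f) <= C * hnorm (A2 f).

Definition cintegrable d (X : measurableType d) (mu : {measure set X -> \bar R})
  (h : X -> R[i]) : Prop :=
  mu.-integrable setT (EFin \o (fun x => complex.Re (h x))) /\
  mu.-integrable setT (EFin \o (fun x => complex.Im (h x))).

Definition cintegral d (X : measurableType d) (mu : {measure set X -> \bar R})
  (h : X -> R[i]) : R[i] :=
  Complex (Rintegral mu setT (fun x => complex.Re (h x)))
          (Rintegral mu setT (fun x => complex.Im (h x))).

Definition weakly_measurable d (X : measurableType d) (H : hilbert R)
  (g : X -> H) : Prop :=
  forall y : H, measurable_fun setT (fun x => complex.Re (hdot (g x) y)) /\
                measurable_fun setT (fun x => complex.Im (hdot (g x) y)).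

(* The integrand of the controlled g-fusion frame condition, where
   Q x : H -> K x stands for the composite operator  Lambda_x P_{F(x)}
   (resp. Lambda_x P_{F(x)} V^* P_{VF(x)} for the family Gamma). *)
Definition frame_integrand d (X : measurableType d) (H : hilbert R)
  (K : X -> hilbert R) (v : X -> R) (Q : forall x, H -> K x) (T U : H -> H)
  (f g : H) (x : X) : R[i] :=
  ((v x) ^+ 2)%:C * hdot (Q x (U f)) (Q x (T g)).

Definition ctu_frame_ineq d (X : measurableType d) (mu : {measure set X -> \bar R})
  (H : hilbert R) (K : X -> hilbert R) (v : X -> R) (Q : forall x, H -> K x)
  (T U Lstar : H -> H) (A B : R) : Prop :=
  [/\ 0 < A, A <= B &
      forall f : H,
        cintegrable mu (frame_integrand v Q T U f f) /\
        (A * hnorm (Lstar f) ^+ 2)%:C <= cintegral mu (frame_integrand v Q T U f f)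
        <= (B * hnorm f ^+ 2)%:C].

Definition ctu_gfusion_frame d (X : measurableType d) (mu : {measure set X -> \bar R})
  (H : hilbert R) (K : X -> hilbert R) (v : X -> R) (F : X -> set H)
  (P : X -> H -> H) (Lam : forall x, H -> K x) (T U L Lstar : H -> H) : Prop :=
  [/\ is_bounded L /\ is_adjoint L Lstar, in_GBplus T /\ in_GBplus U,
      measurable_fun setT v /\ (forall x, 0 < v x),
      (forall x, closed_subspace (F x) /\ is_orth_proj (F x) (P x))
      /\ (forall f : H, weakly_measurable (fun x => P x f))
      /\ (forall x, is_bounded_on (F x) (Lam x)) &
      exists A B : R, ctu_frame_ineq mu v (fun x y => Lam x (P x y)) T U Lstar A B].

(* S is the frame operator of the family:
   <S f, g> = int v^2 <T^* P Lam^* Lam P U f, g> = int v^2 <Lam P U f, Lam P T g> *)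
Definition is_frame_operator d (X : measurableType d) (mu : {measure set X -> \bar R})
  (H : hilbert R) (K : X -> hilbert R) (v : X -> R)
  (P : X -> H -> H) (Lam : forall x, H -> K x) (T U S : H -> H) : Prop :=
  is_bounded S /\
  forall f g : H,
    hdot (S f) g = cintegral mu (frame_integrand v (fun x y => Lam x (P x y)) T U f g).

End HilbertDefs.

(* Main.v *)
Require Import Defs.
From HB Require Import structures.
From mathcomp Require Import all_boot all_order all_algebra.
From mathcomp Require Import all_classical all_reals all_analysis.
From mathcomp Require Import complex.
From mathcomp Require Import ring lra.

Set Implicit Arguments.
Unset Strict Implicit.
Unset Printing Implicit Defensive.
Import Order.TTheory GRing.Theory Num.Theory.
Local Open Scope ring_scope.
Local Open Scope classical_set_scope.

Section Aux.
Local Open Scope complex_scope.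
Variable R : realType.
Variable H : hilbert R.
Implicit Types x y z : H.

Lemma hdotDl x y z : hdot (x + y) z = hdot x z + hdot y z.
Proof. by have := hdot_linl 1 x y z; rewrite scale1r mul1r. Qed.

Lemma hdot0l z : hdot (0 : H) z = 0.
Proof.
have h := hdotDl 0 0 z; rewrite addr0 in h.
by apply: (addrI (hdot 0 z)); rewrite addr0 -h.
Qed.

Lemma hdotZl a x z : hdot (a *: x) z = a * hdot x z.
Proof. by have := hdot_linl a x 0 z; rewrite addr0 hdot0l addr0. Qed.

Lemma hdotNl x z : hdot (- x) z = - hdot x z.
Proof. by rewrite -scaleN1r hdotZl mulN1r. Qed.

Lemma hdotBl x y z : hdot (x - y) z = hdot x z - hdot y z.
Proof. by rewrite hdotDl hdotNl. Qed.

Lemma hdot_conj x y : (hdot x y)^* = hdot y x.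
Proof. by symmetry; apply: hdot_sym. Qed.

Lemma hdotDr x y z : hdot x (y + z) = hdot x y + hdot x z.
Proof. by rewrite [LHS]hdot_sym hdotDl rmorphD /= !hdot_conj. Qed.

Lemma hdotZr a x y : hdot x (a *: y) = a^* * hdot x y.
Proof. by rewrite [LHS]hdot_sym hdotZl rmorphM /= hdot_conj. Qed.

Lemma hdotNr x z : hdot x (- z) = - hdot x z.
Proof. by rewrite [LHS]hdot_sym hdotNl rmorphN /= hdot_conj. Qed.

Lemma hdotBr x y z : hdot x (y - z) = hdot x y - hdot x z.
Proof. by rewrite hdotDr hdotNr. Qed.

Lemma hdot_ext (u w : H) : (forall z, hdot z u = hdot z w) -> u = w.
Proof.
move=> h; apply/eqP; rewrite -subr_eq0; apply/eqP; apply: hdot_def.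
by rewrite hdotBr h subrr.
Qed.

Lemma ge0_C (z : R[i]) : 0 <= z -> z = (complex.Re z)%:C.
Proof. by case: z => a b; rewrite lecE /= => /andP[/eqP -> _]. Qed.

Lemma ge0_Re (z : R[i]) : 0 <= z -> 0 <= complex.Re z.
Proof. by case: z => a b; rewrite lecE /= => /andP[_ ->]. Qed.

Lemma hdot_norm x : hdot x x = (hnorm x ^+ 2)%:C.
Proof.
rewrite /hnorm sqr_sqrtr; first exact: ge0_C (hdot_pos x).
exact: ge0_Re (hdot_pos x).
Qed.

Lemma hnorm_ge0 x : 0 <= hnorm x.
Proof. exact: sqrtr_ge0. Qed.

Lemma hnorm0 : hnorm (0 : H) = 0.
Proof. by rewrite /hnorm hdot0l /= sqrtr0. Qed.

Lemma hnorm_eq0 x : hnorm x = 0 -> x = 0.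
Proof. by move=> h; apply: hdot_def; rewrite hdot_norm h expr2 mulr0. Qed.


Section Lin.
Variable A : H -> H.
Hypothesis lA : is_linear_op A.

Lemma linD x y : A (x + y) = A x + A y.
Proof. by have := lA 1 x y; rewrite !scale1r. Qed.

Lemma lin0 : A 0 = 0.
Proof.
have h := linD 0 0; rewrite addr0 in h.
by apply: (addrI (A 0)); rewrite addr0 -h.
Qed.

Lemma linZ a x : A (a *: x) = a *: A x.
Proof. by have := lA a x 0; rewrite !addr0 lin0 addr0. Qed.

Lemma linN x : A (- x) = - A x.
Proof. by rewrite -scaleN1r linZ scaleN1r. Qed.

Lemma linB x y : A (x - y) = A x - A y.
Proof. by rewrite linD linN. Qed.
End Lin.

Lemma adj_lin (A As : H -> H) : is_adjoint A As -> is_linear_op As.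
Proof.
move=> hA a x y; apply: hdot_ext => z.
by rewrite -hA hdotDr hdotZr hdotDr hdotZr -!hA.
Qed.

Lemma pos_selfadj (Q : H -> H) : is_linear_op Q -> is_positive Q ->
  forall x y, hdot (Q x) y = hdot x (Q y).
Proof.
move=> lQ pQ x y.
have e1 := ge0_C (pQ (x + y)).
have e2 := ge0_C (pQ (x + 'i *: y)).
have e3 := ge0_C (pQ x).
have e4 := ge0_C (pQ y).
rewrite (linD lQ) !hdotDl !hdotDr in e1.
rewrite (linD lQ) (linZ lQ) !hdotDl !hdotDr !hdotZl !hdotZr in e2.
rewrite -(hdot_conj (Q y) x).
move: e1 e2 e3 e4.
case: (hdot (Q x) y) => a1 a2; case: (hdot (Q y) x) => b1 b2.
case: (hdot (Q x) x) => c1 c2; case: (hdot (Q y) y) => d1 d2.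
simpc; move=> /(congr1 (@complex.Im _)) /= e1 /(congr1 (@complex.Im _)) /= e2 /(congr1 (@complex.Im _)) /= e3 /(congr1 (@complex.Im _)) /= e4.
by congr Complex; lra.
Qed.

Lemma proj_eq (M : set H) (P : H -> H) :
  (forall (a : R[i]) x y, M x -> M y -> M (a *: x + y)) -> is_orth_proj M P ->
  forall y1 y2, (forall m, M m -> hdot (y1 - y2) m = 0) -> P y1 = P y2.
Proof.
move=> cM hP y1 y2 h.
have Md : M (P y1 - P y2).
  by rewrite addrC -scaleN1r; apply: cM; [case: (hP y2)|case: (hP y1)].
have e : P y1 - P y2 = (y1 - y2) - ((y1 - P y1) - (y2 - P y2)).
  by rewrite !opprB !addrA subrK [RHS]addrAC [y1 - P y2 - y1]addrAC subrr add0r addrC.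
apply/eqP; rewrite -subr_eq0; apply/eqP; apply: hdot_def.
rewrite {1}e hdotBl h // hdotBl (proj2 (hP y1)) // (proj2 (hP y2)) //.
by rewrite !subr0.
Qed.

Lemma sq_inj (a b : R) : 0 <= a -> 0 <= b -> a ^+ 2 = b ^+ 2 -> a = b.
Proof. move=> ha hb e; apply/eqP; rewrite eq_le; apply/andP; split; nra. Qed.

Lemma qb_of (A1 A2 : H -> H) : is_linear_op A1 -> is_linear_op A2 ->
  (exists C : R, 0 < C /\ forall f, hnorm (A1 f) <= C * hnorm (A2 f)) ->
  quotient_bounded A1 A2.
Proof.
move=> l1 l2 [C [C0 hC]]; split; last by exists C.
move=> f g e; apply/eqP; rewrite -subr_eq0; apply/eqP; apply: hnorm_eq0.
rewrite -(linB l1); apply/eqP; rewrite eq_le hnorm_ge0 andbT.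
by rewrite (le_trans (hC _)) // (linB l2) e subrr hnorm0 mulr0.
Qed.

Lemma lin_comp (A B : H -> H) : is_linear_op A -> is_linear_op B ->
  is_linear_op (fun f => A (B f)).
Proof. by move=> lA lB a x y; rewrite lB lA. Qed.

End Aux.

Section Main.
Local Open Scope complex_scope.

Theorem theorem3p13 (R : realType) (d : measure_display) (X : measurableType d)
  (mu : {measure set X -> \bar R}) (H : hilbert R) (Kx : X -> hilbert R)
  (v : X -> R) (F : X -> set H) (P : X -> H -> H) (Lam : forall x : X, H -> Kx x)
  (T U K Kstar SC SChalf V Vstar VKstar W : H -> H) (PV : X -> H -> H) :
  separable H ->
  ctu_gfusion_frame mu v F P Lam T U K Kstar ->
  is_frame_operator mu v P Lam T U SC ->
  is_positive SC ->
  is_bounded V -> has_bounded_inverse V -> is_adjoint V Vstar ->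
  (forall f : H, Vstar (T f) = T (Vstar f)) ->
  (forall f : H, Vstar (U f) = U (Vstar f)) ->
  is_adjoint (fun f => V (K f)) VKstar ->
  (forall x : X, is_orth_proj (V @` F x) (PV x)) ->
  is_sqrt SC SChalf ->
  is_sqrt (fun f => V (SC (Vstar f))) W ->
  [<-> (exists A' B' : R,
          ctu_frame_ineq mu v (fun x f => Lam x (P x (Vstar (PV x f)))) T U VKstar A' B');
       quotient_bounded VKstar (fun f => SChalf (Vstar f));
       quotient_bounded VKstar W].
Proof.
move=> _ hfr hSC pSC bV iV aV cT cU aVK hPV sq1 sq2.
case: hfr => _ _ _ [hF _] [A [B [A0 AB hAB]]].
have lVs := adj_lin aV.
have lVK := adj_lin aVK.
case: sq1 => [[lS1 _] pS1 S1S1].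
case: sq2 => [[lW [CW hCW]] pW WW].
have key1 x g : P x (Vstar (PV x g)) = P x (Vstar g).
  have [[_ cF _] hP] := hF x.
  apply: (proj_eq cF hP) => m Fm.
  rewrite -(linB lVs) -(hdot_conj m) -(aV m) -(hdot_conj (PV x g - g)) -opprB hdotNl.
  rewrite (proj2 (hPV x g)); first by rewrite oppr0 !conjc0.
  by exists m.
have key2 f : frame_integrand v (fun x f => Lam x (P x (Vstar (PV x f)))) T U f f
    = frame_integrand v (fun x y => Lam x (P x y)) T U (Vstar f) (Vstar f).
  by apply: funext => x; rewrite /frame_integrand !key1 cT cU.
set q := fun f => complex.Re (hdot (SC (Vstar f)) (Vstar f)).
have key3 f : cintegral mu (frame_integrand v (fun x f => Lam x (P x (Vstar (PV x f)))) T U f f)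
    = (q f)%:C.
  by rewrite key2 -(proj2 hSC); apply: ge0_C.
have key5 f : hnorm (SChalf (Vstar f)) ^+ 2 = q f.
  apply: complexI; rewrite -hdot_norm -(pos_selfadj lS1 pS1) S1S1.
  by apply: ge0_C.
have key6 f : hnorm (W f) ^+ 2 = q f.
  apply: complexI; rewrite -hdot_norm -(pos_selfadj lW pW) WW aV.
  by apply: ge0_C.
have key7 f : hnorm (SChalf (Vstar f)) = hnorm (W f).
  by apply: sq_inj; rewrite ?hnorm_ge0 ?key5 ?key6.
split; [|split].
- case=> A' [B' [A'0 _ hh]].
  apply: qb_of => //; first exact: lin_comp.
  have r0 : 0 < Num.sqrt A' by rewrite sqrtr_gt0.
  exists (Num.sqrt A')^-1; split; first by rewrite invr_gt0.
  move=> f; have [_ /andP[hl _]] := hh f.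
  rewrite key3 lecR -key5 -(sqr_sqrtr (ltW A'0)) in hl.
  have rr : Num.sqrt A' * (Num.sqrt A')^-1 = 1 by rewrite mulfV // gt_eqF.
  have ri : 0 < (Num.sqrt A')^-1 by rewrite invr_gt0.
  have n0 := hnorm_ge0 (VKstar f).
  have s0 := hnorm_ge0 (SChalf (Vstar f)).
  have h1 : Num.sqrt A' * hnorm (VKstar f) <= hnorm (SChalf (Vstar f)) by nra.
  have := ler_wpM2l (ltW ri) h1.
  by rewrite mulrA [_^-1 * _]mulrC rr mul1r.
- case=> _ [C [C0 hC]]; apply: qb_of => //; exists C; split => // f.
  by rewrite -key7.
- case=> _ [C [C0 hC]].
  set c := C^-1.
  have c0 : 0 < c by rewrite invr_gt0.
  have cC : c * C = 1 by rewrite mulVf // gt_eqF.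
  exists (c ^+ 2), (c ^+ 2 + CW ^+ 2); split.
  + by rewrite exprn_gt0.
  + by rewrite lerDl sqr_ge0.
  move=> f; split; first by rewrite key2; exact: (proj1 (hAB (Vstar f))).
  rewrite key3 !lecR -key6.
  have n0 := hnorm_ge0 (VKstar f).
  have s0 := hnorm_ge0 (W f).
  have f0 := hnorm_ge0 f.
  have h1 : c * hnorm (VKstar f) <= hnorm (W f).
    by have := ler_wpM2l (ltW c0) (hC f); rewrite mulrA cC mul1r.
  have h2 := hCW f.
  have cn0 : 0 <= c * hnorm (VKstar f) by rewrite mulr_ge0 // ltW.
  apply/andP; split; first by rewrite -exprMn; nra.
  have : hnorm (W f) ^+ 2 <= CW ^+ 2 * hnorm f ^+ 2 by nra.
  have : 0 <= c ^+ 2 * hnorm f ^+ 2 by rewrite mulr_ge0 // sqr_ge0.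
  by nra.
Qed.
End Main.
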